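(* Let $k\ge0$ be an integer and let $G$ be a threshold graph such that $\mathrm{seq}(G)$ contains at least $k$ ones. Then a vertex $v\in V(G)$ lies in the $k$-core of $G$ if and only if $\deg_G(v)\ge k$.
   Context: A threshold graph on $n\ge1$ vertices is built from a base vertex $v_0$ by successively adding $v_1,\dots,v_{n-1}$, each either isolated (adjacent to no earlier vertex) or dominating (adjacent to all earlier vertices); its creation sequence $\mathrm{seq}(G)=s_1\cdots s_{n-1}$ has $s_i=1$ if $v_i$ is dominating and $s_i=0$ otherwise. The $k$-core of a graph is its maximum induced subgraph in which every vertex has degree at least $k$ (obtained by iteratively deleting vertices of degree less than $k$); it may be empty. *)

(* Defs.v *)
From mathcomp Require Import all_boot.
Set Implicit Arguments. Unset Strict Implicit. Unset Printing Implicit Defensive.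

(* A simple graph is a relation [e : rel T] on a finite type [T]
   (symmetric and irreflexive in our uses). *)

Definition deg (T : finType) (e : rel T) (v : T) : nat := #|[set u | e v u]|.

Definition min_deg_ge (T : finType) (e : rel T) (k : nat) (S : {set T}) : bool :=
  [forall v in S, k <= #|[set u in S | e v u]|].

(* The k-core: the maximum induced subgraph with minimum degree >= k,
   i.e. the union of all vertex sets S with min_deg_ge e k S (this union
   itself satisfies the property, hence is the maximum one; possibly empty). *)
Definition kcore (T : finType) (e : rel T) (k : nat) : {set T} :=
  \bigcup_(S | min_deg_ge e k S) S.

(* Threshold graph on vertices v_0, ..., v_n (type 'I_n.+1) with creation
   sequence s = s_1 ... s_n (s_i = nth false s (i-1)): for i < j, v_i ~ v_j
   iff v_j is dominating, i.e. s_j = true. *)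
Definition threshold_adj (n : nat) (s : seq bool) : rel 'I_n.+1 :=
  fun i j => (i != j) && nth false s (maxn i j).-1.

(* Main.v *)
Require Import Defs.
From mathcomp Require Import all_boot.

Lemma count_sum_nth (s : seq bool) :
  count id s = \sum_(i < size s) nth false s i.
Proof.
elim: s => [|b s IH]; first by rewrite big_ord0.
by rewrite /= big_ord_recl /= IH.
Qed.

Section T.
Variables (n : nat) (s : seq bool).
Hypothesis Hs : size s = n.
Let e := @threshold_adj n s.
Definition domv (u : 'I_n.+1) := (0 < u) && nth false s u.-1.
Let D := [set u : 'I_n.+1 | domv u].
Let T := ord0 |: D.

Lemma cardD : #|D| = count id s.
Proof.
rewrite /D -sum1dep_card big_mkcond big_ord_recl /= add0n count_sum_nth Hs.
by apply: eq_bigr => i _; rewrite /domv /=; case: (nth _ _ _).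
Qed.

Lemma cardT1 : #|T| = (count id s).+1.
Proof. by rewrite /T cardsU1 cardD inE /domv ltnn. Qed.

Lemma lemA u : domv u -> T :\ u \subset [set w | e u w].
Proof.
move=> du; apply/subsetP => w; rewrite !inE => /andP [wu /orP [/eqP wE | dw]].
  subst w; move: du; rewrite /e /threshold_adj /domv => /andP [u0 hu].
  by rewrite eq_sym wu /= maxn0.
move: du dw; rewrite /e /threshold_adj /domv eq_sym wu => /andP [_ hu] /andP [_ hw] /=.
by rewrite /maxn; case: ltnP.
Qed.

Lemma lemB u : ~~ domv u -> [set w | e u w] \subset D.
Proof.
move=> du; apply/subsetP => w; rewrite !inE /e /threshold_adj => /andP [uw].
rewrite /domv /maxn; case: (ltnP u w) => [uw' hw | wu hu].
  by rewrite hw andbT (leq_ltn_trans _ uw').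
exfalso; move: du; rewrite /domv hu andbT -leqNgt leqn0 => /eqP u0.
move: wu uw; rewrite u0 leqn0 => /eqP w0.
by rewrite (_ : u = w) ?eqxx //; apply: val_inj; rewrite /= u0 w0.
Qed.

Lemma cardTD u : domv u -> #|T :\ u| = count id s.
Proof.
move=> du; have := cardsD1 u T.
by rewrite cardT1 /T in_setU1 inE du orbT add1n => -[].
Qed.

Lemma degT u : domv u -> count id s <= deg e u.
Proof.
move=> du; rewrite /deg -(cardTD _ du); exact: subset_leq_card (lemA _ du).
Qed.

Lemma deg0 : count id s <= deg e ord0.
Proof.
rewrite -cardD /deg; apply: subset_leq_card; apply/subsetP => w.
rewrite !inE /e /threshold_adj /domv => /andP [w0 hw].
rewrite eq_sym -lt0n w0 /=.
by rewrite maxnC maxn0 hw.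
Qed.

End T.

Theorem mainTheorem14 (k n : nat) (s : seq bool) :
  size s = n -> k <= count id s ->
  forall v : 'I_n.+1,
    (v \in kcore (threshold_adj s) k) = (k <= deg (threshold_adj s) v).
Proof.
move=> Hs Hk v; apply/idP/idP.
  move/bigcupP => [S /forallP HS vS].
  move: (HS v); rewrite vS /= => h; apply: leq_trans h _.
  rewrite /deg; apply: subset_leq_card; apply/subsetP => w; rewrite !inE.
  by case/andP.
move=> kv; apply/bigcupP; exists [set u | k <= deg (threshold_adj s) u]; last by rewrite inE.
have TS : forall w, (w == ord0) || domv n s w -> k <= deg (threshold_adj s) w.
  move=> w /orP [/eqP -> | dw]; apply: leq_trans Hk _; first by have := deg0 _ _ Hs.
  exact: (degT _ _ Hs _ dw).
apply/forallP => u; apply/implyP; rewrite inE => ku.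
case du: (domv n s u).
  apply: leq_trans Hk _; rewrite -(cardTD _ _ Hs _ du).
  apply: subset_leq_card; apply/subsetP => w wT.
  have := subsetP (lemA _ _ _ du) w wT; rewrite !inE => ->; rewrite andbT.
  apply: TS; move: wT; rewrite !inE => /andP [_]; by [].
have -> : [set w in [set u | k <= deg (threshold_adj s) u] | threshold_adj s u w]
          = [set w | threshold_adj s u w].
  apply/setP => w; rewrite !inE; case h: (threshold_adj s u w); rewrite ?andbF //.
  rewrite andbT; apply: TS; apply/orP; right.
  by have := subsetP (lemB _ _ _ (negbT du)) w; rewrite !inE; apply.
by [].
Qed.
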